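(* For every integer $r\ge0$, \[ \sum_{n=1}^{\infty}\frac{h_n^{(r)}}{(n+1)(n+2)\cdots(n+r+1)}=\frac{1}{r!}, \] equivalently $\sum_{n=1}^{\infty}h_n^{(r)}B(r+1,n+1)=1$.
   Context: Hyperharmonic numbers: $h_n^{(0)}=1/n$ for $n\ge1$, and for $r\ge1$, $h_n^{(r)}=\sum_{j=1}^{n}h_j^{(r-1)}$. $B(x,y)=\int_0^1t^{x-1}(1-t)^{y-1}\,dt$ is the Beta function. *)

(* Defs.v *)
From Stdlib Require Import Reals.
Open Scope R_scope.

(* Hyperharmonic numbers h_n^{(r)} (meaningful for n >= 1; h_0^{(r)} := 0,
   which is consistent with the empty-sum convention for r >= 1). *)
Fixpoint hyperharmonic (r : nat) : nat -> R :=
  match r with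
  | O => fun n => match n with O => 0 | _ => / INR n end
  | S r' => fix H (n : nat) : R :=
      match n with
      | O => 0
      | S m => H m + hyperharmonic r' (S m)
      end
  end.

Fixpoint rising_from (n k : nat) : R :=
  match k with
  | O => 1
  | S k' => rising_from n k' * INR (n + S k')
  end.

Lemma hyperharmonic_0 (n : nat) : (1 <= n)%nat -> hyperharmonic 0 n = / INR n.
Proof. destruct n; [intro H; inversion H | reflexivity]. Qed.
Lemma hyperharmonic_S (r n : nat) :
  hyperharmonic (S r) (S n) = hyperharmonic (S r) n + hyperharmonic r (S n).
Proof. reflexivity. Qed.

(* Main.v *)
Require Import Defs.
From Stdlib Require Import Reals Arith Lia Lra.
Open Scope R_scope.

Lemma h_nonneg r n : 0 <= hyperharmonic r n.
Proof.
  revert n; induction r as [|r IH]; intro n.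
  - destruct n. simpl; lra. rewrite hyperharmonic_0 by lia. left; apply Rinv_0_lt_compat, lt_0_INR; lia.
  - induction n as [|n IHn]. simpl; lra.
    rewrite hyperharmonic_S. specialize (IH (S n)). lra.
Qed.

Lemma rising_pos n k : 0 < rising_from n k.
Proof.
  induction k; simpl. lra. apply Rmult_lt_0_compat; auto. apply lt_0_INR; lia.
Qed.

Lemma rising_S n k : rising_from n (S k) = rising_from n k * INR (n + S k).
Proof. reflexivity. Qed.

Lemma rising_shift n r : rising_from (S n) r * INR (S n) = rising_from n (S r).
Proof.
  induction r as [|r IH].
  - rewrite rising_S. change (rising_from (S n) 0) with 1. change (rising_from n 0) with 1.
    rewrite Nat.add_1_r. ring.
  - rewrite (rising_S (S n)), (rising_S n (S r)), <- IH.
    replace (S n + S r)%nat with (n + S (S r))%nat by lia. ring.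
Qed.

Lemma rising_mono n r : rising_from n r <= rising_from (S n) r.
Proof.
  induction r as [|r IH]. simpl; lra.
  rewrite !rising_S. apply Rmult_le_compat.
  - left; apply rising_pos.
  - apply pos_INR.
  - exact IH.
  - apply le_INR; lia.
Qed.

Lemma rising_mono_le m n r : (m <= n)%nat -> rising_from m r <= rising_from n r.
Proof.
  induction 1. lra. eapply Rle_trans; [exact IHle| apply rising_mono].
Qed.

Definition a r n := hyperharmonic r n / rising_from n (S r).
Definition U r n := hyperharmonic r n / rising_from (S n) r.
Definition PS r N := sum_f_R0 (fun k => a r (S k)) N.

Lemma step r m :
  INR (S r) * a (S r) (S m) = a r (S m) - U (S r) (S m) + U (S r) m.
Proof.
  unfold a, U. rewrite hyperharmonic_S.
  set (n := S m).
  set (x := hyperharmonic (S r) m). set (y := hyperharmonic r n).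
  assert (HA := rising_shift n r).
  assert (HP := rising_pos n r).
  assert (HP' := rising_pos (S n) r).
  rewrite (rising_S n (S r)), (rising_S (S n) r), (rising_S n r) in *.
  fold n.
  rewrite <- HA.
  replace (n + S (S r))%nat with (S n + S r)%nat by lia.
  rewrite !plus_INR, !S_INR in *.
  assert (0 <= INR n) by apply pos_INR.
  assert (0 <= INR r) by apply pos_INR.
  field; repeat split; try lra.
Qed.

Lemma PS_id r N : INR (S r) * PS (S r) N = PS r N - U (S r) (S N).
Proof.
  unfold PS. induction N as [|N IH]; simpl sum_f_R0.
  - rewrite step. unfold U at 2. simpl hyperharmonic. unfold Rdiv. ring.
  - rewrite Rmult_plus_distr_l, IH, step. ring.
Qed.

Lemma squeeze (u v : nat -> R) :
  (forall n, 0 <= u n <= v n) -> Un_cv v 0 -> Un_cv u 0.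
Proof.
  intros H Hv eps He. destruct (Hv eps He) as [N HN]. exists N. intros n Hn.
  specialize (HN n Hn). specialize (H n). unfold R_dist in *.
  rewrite Rminus_0_r in *. rewrite Rabs_right in * by lra. lra.
Qed.

Lemma shift (w : nat -> R) l : Un_cv w l -> Un_cv (fun n => w (S n)) l.
Proof.
  intros H eps He. destruct (H eps He) as [N HN]. exists N. intros n Hn.
  apply HN. lia.
Qed.

Lemma cst c : Un_cv (fun _ => c) c.
Proof.
  intros eps He. exists O. intros. unfold R_dist. rewrite Rminus_diag, Rabs_R0. lra.
Qed.

Lemma U_nonneg r n : 0 <= U r n.
Proof.
  unfold U. unfold Rdiv. apply Rmult_le_pos. apply h_nonneg.
  left; apply Rinv_0_lt_compat, rising_pos.
Qed.

Lemma inv_cv : Un_cv (fun n => / INR (S n)) 0.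
Proof.
  intros eps He. destruct (INR_unbounded (/ eps)) as [N HN].
  exists N. intros n Hn. unfold R_dist. rewrite Rminus_0_r.
  assert (0 < INR (S n)) by (apply lt_0_INR; lia).
  assert (INR N <= INR n) by (apply le_INR; lia).
  rewrite S_INR in *.
  rewrite Rabs_right by (left; apply Rinv_0_lt_compat; lra).
  assert (0 < / eps) by (apply Rinv_0_lt_compat; lra).
  rewrite <- (Rinv_inv eps).
  apply Rinv_lt_contravar. apply Rmult_lt_0_compat; lra. lra.
Qed.

Lemma h_bound r n :
  hyperharmonic (S r) n <= rising_from (S n) r * sum_f_R0 (U r) n.
Proof.
  induction n as [|n IH].
  - simpl sum_f_R0. simpl hyperharmonic at 1.
    apply Rmult_le_pos. left; apply rising_pos. apply U_nonneg.
  - rewrite hyperharmonic_S. simpl sum_f_R0.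
    assert (Hs : 0 <= sum_f_R0 (U r) n).
    { apply cond_pos_sum. intro; apply U_nonneg. }
    assert (Hm := rising_mono (S n) r).
    assert (Hp := rising_pos (S (S n)) r).
    assert (E : hyperharmonic r (S n) = rising_from (S (S n)) r * U r (S n)).
    { unfold U. field. lra. }
    rewrite E, Rmult_plus_distr_l.
    apply Rplus_le_compat_r. eapply Rle_trans. exact IH.
    apply Rmult_le_compat_r; auto.
Qed.

Lemma U_cv r : Un_cv (U r) 0.
Proof.
  induction r as [|r IH].
  - intros eps He. destruct (inv_cv eps He) as [N HN]. exists (S N).
    intros n Hn. destruct n as [|n]. lia.
    replace (U 0 (S n)) with (/ INR (S n)). apply HN; lia.
    unfold U. change (rising_from (S (S n)) 0) with 1. rewrite hyperharmonic_0 by lia. unfold Rdiv; rewrite Rinv_1; ring.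
  - apply (squeeze _ (fun n => sum_f_R0 (U r) (pred (S n)) / INR (S n))).
    + intro n. split. apply U_nonneg. simpl pred.
      unfold U at 1. rewrite (rising_S (S n) r).
      assert (Hb := h_bound r n).
      assert (Hp := rising_pos (S n) r).
      assert (0 < INR (S n)) by (apply lt_0_INR; lia).
      assert (INR (S n) <= INR (S n + S r)) by (apply le_INR; lia).
      assert (Hs : 0 <= sum_f_R0 (U r) n).
      { apply cond_pos_sum. intro; apply U_nonneg. }
      unfold Rdiv. rewrite Rinv_mult.
      apply Rle_trans with (rising_from (S n) r * sum_f_R0 (U r) n *
                             (/ rising_from (S n) r * / INR (S n + S r))).
      { apply Rmult_le_compat_r; auto. apply Rmult_le_pos; left; apply Rinv_0_lt_compat; lra. }
      replace (rising_from (S n) r * sum_f_R0 (U r) n *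
               (/ rising_from (S n) r * / INR (S n + S r)))
        with (sum_f_R0 (U r) n * / INR (S n + S r)) by (field; lra).
      apply Rmult_le_compat_l; auto. apply Rinv_le_contravar; lra.
    + apply (shift (fun n => sum_f_R0 (U r) (pred n) / INR n)).
      apply Cesaro_1. exact IH.
Qed.

Lemma PS0 N : PS 0 N = 1 - / INR (S (S N)).
Proof.
  unfold PS. induction N as [|N IH].
  - unfold a. simpl sum_f_R0. simpl. field.
  - rewrite tech5, IH. unfold a. rewrite hyperharmonic_0 by lia.
    rewrite rising_S. change (rising_from (S (S N)) 0) with 1.
    rewrite !Nat.add_1_r.
    assert (0 <= INR N) by apply pos_INR.
    rewrite !S_INR. field. repeat split; lra.
Qed.

Lemma PS_cv r : Un_cv (PS r) (/ INR (fact r)).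
Proof.
  induction r as [|r IH].
  - apply (Un_cv_ext (fun N => 1 - / INR (S (S N)))).
    { intro; symmetry; apply PS0. }
    simpl fact. replace (/ INR 1) with (1 - 0) by (simpl; field).
    apply CV_minus. apply cst. apply (shift (fun n => / INR (S n))). apply inv_cv.
  - apply (Un_cv_ext (fun N => (PS r N - U (S r) (S N)) * / INR (S r))).
    { intro N. rewrite <- PS_id. field. apply not_0_INR; lia. }
    replace (/ INR (fact (S r))) with ((/ INR (fact r) - 0) * / INR (S r)).
    + apply CV_mult. apply CV_minus. exact IH. apply (shift (U (S r))). apply U_cv.
      apply cst.
    + rewrite fact_simpl, mult_INR. rewrite Rminus_0_r.
      assert (0 < INR (fact r)) by (apply lt_0_INR, lt_O_fact).
      assert (0 < INR (S r)) by (apply lt_0_INR; lia).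
      field. lra.
Qed.

Theorem proposition5 (r : nat) :
  infinite_sum
    (fun k : nat => hyperharmonic r (S k) / rising_from (S k) (S r))
    (/ INR (Factorial.fact r)).
Proof.
  intros eps He. destruct (PS_cv r eps He) as [N HN]. exists N. intros n Hn.
  exact (HN n Hn).
Qed.
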